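(* With the conventions $g(0)=h(0)=g_1(0)=h_1(0)=0$, for all $M\geq 2$: $$g(M)=g(M-1)+g(M-2)+F_{M-1},\qquad h(M)=h(M-1)+h(M-2)+F_{M-2},$$ $$g_1(M)=g_1(M-1)+g_1(M-2)+F_{M-1},\qquad h_1(M)=h_1(M-1)+h_1(M-2)+F_{M-1}.$$
   Context: $F_k$ denotes the Fibonacci numbers with $F_{-1}=1$, $F_0=0$, $F_1=1$, $F_k=F_{k-1}+F_{k-2}$. The perimeter of a nonempty partition $\lambda$ with largest part $\lambda_1$ and $\ell(\lambda)$ parts is $\lambda_1+\ell(\lambda)-1$. $\mathcal G(M)$ is the set of partitions into odd parts with perimeter $M$, $\mathcal H(M)$ the set of partitions into distinct parts with perimeter $M$; $g(M)$ (resp. $h(M)$) is the total number of parts, summed over all partitions in $\mathcal G(M)$ (resp. $\mathcal H(M)$). $\mathcal G_1(M)$ is the set of partitions with perimeter $M$ in which exactly one distinct even integer occurs as a part (possibly with multiplicity greater than one) and all other parts are odd; $\mathcal H_1(M)$ is the set of partitions with perimeter $M$ in which exactly one part value occurs at least twice and every other part value occurs exactly once. $g_1(M)=|\mathcal G_1(M)|$, $h_1(M)=|\mathcal H_1(M)|$. *)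

(* Defs.v *)
From mathcomp Require Import all_boot.
Set Implicit Arguments. Unset Strict Implicit. Unset Printing Implicit Defensive.

Fixpoint fib (n : nat) : nat :=
  match n with 0 => 0 | 1 => 1 | (m.+1 as k).+1 => fib k + fib m end.

Definition is_partition (s : seq nat) : bool :=
  sorted geq s && all (fun x => 0 < x) s.

Definition perimeter (s : seq nat) : nat := head 0 s + size s - 1.

Fixpoint seqs_upto (k b : nat) : seq (seq nat) :=
  match k with
  | 0 => [:: [::]]
  | k'.+1 => [::] :: [seq x :: s | x <- iota 1 b, s <- seqs_upto k' b]
  end.

(* all nonempty partitions of perimeter M (a partition of perimeter M has
   largest part <= M and at most M parts, so the enumeration is complete) *)
Definition parts_perim (M : nat) : seq (seq nat) :=
  [seq s <- seqs_upto M M | [&& s != [::], is_partition s & perimeter s == M]].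

Definition in_G (s : seq nat) : bool := all odd s.
Definition in_H (s : seq nat) : bool := uniq s.
(* G_1(M): exactly one distinct even value occurs, all other parts odd *)
Definition in_G1 (s : seq nat) : bool :=
  size (undup [seq x <- s | ~~ odd x]) == 1.
(* H_1(M): exactly one part value occurs at least twice, others exactly once *)
Definition in_H1 (s : seq nat) : bool :=
  count (fun v => 1 < count_mem v s) (undup s) == 1.

Definition g (M : nat) : nat := sumn [seq size s | s <- parts_perim M & in_G s].
Definition h (M : nat) : nat := sumn [seq size s | s <- parts_perim M & in_H s].
Definition g1 (M : nat) : nat := size [seq s <- parts_perim M | in_G1 s].
Definition h1 (M : nat) : nat := size [seq s <- parts_perim M | in_H1 s].

(* Main.v *)
Require Import Defs.
From mathcomp Require Import all_boot.
From mathcomp Require Import zify.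
Set Implicit Arguments. Unset Strict Implicit. Unset Printing Implicit Defensive.


Fixpoint P (n : nat) : seq (seq nat) :=
  match n with
  | 0 => [::]
  | 1 => [:: [:: 1]]
  | (m.+1 as k).+1 => [seq rcons s 1 | s <- P k] ++ [seq map succn s | s <- P k]
  end.

Lemma P_SS n : P n.+2 = [seq rcons s 1 | s <- P n.+1] ++ [seq map succn s | s <- P n.+1].
Proof. by []. Qed.

Definition pp (n : nat) (s : seq nat) : bool :=
  [&& s != [::], is_partition s & perimeter s == n].

Lemma sorted_succ (s : seq nat) : sorted geq (map succn s) = sorted geq s.
Proof. by apply: mono_sorted => x y /=; rewrite ltnS. Qed.

Lemma sorted_rcons1 (s : seq nat) : all (fun x => 0 < x) s ->
  sorted geq (rcons s 1) = sorted geq s.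
Proof.
case: s => [|x s] // Hall.
rewrite /= rcons_path; case: (path geq x s) => //=.
have : last x s \in x :: s by exact: mem_last.
by move/(allP Hall).
Qed.

Lemma pp_rcons n s : pp n s -> pp n.+1 (rcons s 1).
Proof.
case/and3P=> Hne /andP[Hs Hp] Hper.
apply/and3P; split; first by case: s Hne {Hs Hp Hper}.
  by apply/andP; split; [rewrite sorted_rcons1 | rewrite all_rcons Hp].
case: s Hne Hs Hp Hper => [|x s] //= _ _ /andP[Hx _].
rewrite /perimeter /= size_rcons => /eqP <-; apply/eqP; lia.
Qed.

Lemma pp_map n s : pp n s -> pp n.+1 (map succn s).
Proof.
case/and3P=> Hne /andP[Hs Hp] Hper.
apply/and3P; split; first by case: s Hne {Hs Hp Hper}.
  apply/andP; split; first by rewrite sorted_succ.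
  by rewrite all_map; apply/allP.
case: s Hne Hs Hp Hper => [|x s] //= _ _ /andP[Hx _].
rewrite /perimeter /= size_map => /eqP <-; apply/eqP; lia.
Qed.

Lemma pp_pos n s : pp n s -> all (fun x => 0 < x) s.
Proof. by case/and3P=> _ /andP[]. Qed.

Lemma pp_inv n s : pp n.+2 s ->
  (exists2 t, pp n.+1 t & s = rcons t 1) \/ (exists2 t, pp n.+1 t & s = map succn t).
Proof.
case/and3P=> Hne /andP[Hs Hp] Hper.
case/lastP: s Hne Hs Hp Hper => [|t y] // _ Hs Hp Hper.
have Hy : 0 < y by move: Hp; rewrite all_rcons => /andP[].
have Hpt : all (fun x => 0 < x) t by move: Hp; rewrite all_rcons => /andP[].
have Hmin : all (fun x => y <= x) t.
  have := Hs; rewrite -rev_sorted rev_rcons /= => Hpath.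
  have := order_path_min leq_trans Hpath.
  by rewrite all_rev.
case: (boolP (t == [::])) => [/eqP Et | Hnt].
  right; subst t.
  move: Hper; rewrite /perimeter /= => /eqP Hy2.
  exists [:: y.-1]; last by rewrite /= prednK.
  apply/and3P; split => //=; first by (apply/andP; split => //=; lia).
  rewrite /perimeter /=; apply/eqP; lia.
case: (eqVneq y 1) => [Ey | Ny].
  left; subst y; exists t => //.
  apply/and3P; split => //.
    by apply/andP; split; [rewrite -sorted_rcons1 | ].
  move: Hper; case: t Hnt {Hs Hp Hpt Hmin} => [|x t] //= _.
  rewrite /perimeter /= size_rcons => /eqP H; apply/eqP; lia.
have Hall2 : all (fun x => 1 < x) (rcons t y).
  rewrite all_rcons; apply/andP; split; first lia.
  apply/allP => x Hx; have := allP Hmin x Hx; lia.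
have Emap : map succn (map predn (rcons t y)) = rcons t y.
  rewrite -map_comp -[RHS]map_id; apply/eq_in_map => x Hx /=.
  by rewrite prednK //; have := allP Hp x Hx.
right; exists (map predn (rcons t y)); last by rewrite Emap.
apply/and3P; split.
- by case: (t) Hnt.
- apply/andP; split; first by rewrite -sorted_succ Emap.
  rewrite all_map; apply/allP => x Hx /=; have := allP Hall2 x Hx; lia.
- move: Hper; case: t Hnt Hall2 {Hs Hp Hpt Hmin Emap} => [|x t] //= _ /andP[Hx _].
  rewrite /perimeter /= !size_rcons size_map size_rcons => /eqP H; apply/eqP; lia.
Qed.


Lemma memP n s : (s \in P n) = pp n s.
Proof.
elim: n s => [|[|n] IH] s.
- rewrite in_nil; case: s => [|x s] //; apply/esym/negbTE/negP => /and3P[_ /andP[_ /andP[Hx _]]].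
  rewrite /perimeter /= => /eqP; lia.
- rewrite /= inE; apply/eqP/idP => [-> //|].
  case/and3P; case: s => [|x [|y s]] //= _ /andP[_ /andP[Hx _]].
    by rewrite /perimeter /= => /eqP H; congr [:: _]; lia.
  rewrite /perimeter /= => /eqP; lia.
- apply/idP/idP.
  + rewrite /= mem_cat => /orP[] /mapP[t Ht ->].
      by apply: pp_rcons; rewrite -IH.
    by apply: pp_map; rewrite -IH.
  + case/pp_inv => [][t Ht ->]; rewrite /= mem_cat.
      by rewrite (map_f (fun s => rcons s 1)) // IH.
    by rewrite (map_f (map succn)) ?orbT // IH.
Qed.

Lemma uniqP n : uniq (P n).
Proof.
elim: n => [|[|n] IH] //.
rewrite P_SS cat_uniq map_inj_uniq //; last exact: rcons_injl.
rewrite map_inj_uniq //; last exact: inj_map succn_inj.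
rewrite IH andbT.
apply/hasPn => s /mapP[t Ht ->].
apply/negP => /mapP[u Hu E].
have : 1 \in map succn t by rewrite E mem_rcons inE.
case/mapP => z Hz /esym /eqP; rewrite eqSS => /eqP Ez; subst z.
by move: Ht; rewrite memP => /pp_pos /allP /(_ 0 Hz).
Qed.

Lemma mem_seqs k b s :
  (s \in seqs_upto k b) = (size s <= k) && all (fun x => 0 < x <= b) s.
Proof.
elim: k s => [|k IH] [|x s] //=.
rewrite inE /= ltnS; apply/allpairsP/idP.
  case=> [[y t]] /= [Hy Ht [-> ->]]; move: Ht; rewrite IH mem_iota in Hy * => /andP[-> ->]; rewrite andbT; lia.
case/and3P => Hs Hx Ha; exists (x, s); split => //=.
  rewrite mem_iota; lia.
by rewrite IH Hs.
Qed.

Lemma uniq_seqs k b : uniq (seqs_upto k b).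
Proof.
elim: k => [|k IH] //=.
rewrite allpairs_uniq ?iota_uniq //; last first.
  by move=> [a u] [c v] _ _ /= [-> ->].
rewrite andbT; apply/negP => /allpairsP [[y t]] [_ _] //.
Qed.

Lemma mem_parts M s : (s \in parts_perim M) = pp M s.
Proof.
rewrite mem_filter; apply/andP/idP => [[H _] // | H]; split => //.
case/and3P: H => Hne /andP[Hs Hp] Hper.
rewrite mem_seqs.
case: s Hne Hs Hp Hper => [|x s] // _ Hs /andP[Hx Hp] /eqP Hper.
have Hmin := order_path_min (fun y x z (h1 : y <= x) (h2 : z <= y) => leq_trans h2 h1) Hs.
rewrite /perimeter /= in Hper.
apply/andP; split; first by rewrite /=; lia.
rewrite /= Hx /=; apply/andP; split; first lia.
apply/allP => z Hz; have := allP Hp z Hz; have := allP Hmin z Hz => /= ?; lia.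
Qed.

Lemma perm_parts M : perm_eq (parts_perim M) (P M).
Proof.
apply: uniq_perm; first exact/filter_uniq/uniq_seqs.
  exact: uniqP.
by move=> s; rewrite mem_parts memP.
Qed.


Definition rep (s : seq nat) := count (fun v => 1 < count_mem v s) (undup s).

Lemma rep_perm s t : perm_eq s t -> rep s = rep t.
Proof.
move=> H; rewrite /rep.
have Hu : perm_eq (undup s) (undup t).
  apply: uniq_perm; rewrite ?undup_uniq // => x.
  by rewrite !mem_undup (perm_mem H).
rewrite (permP Hu); apply: eq_count => v.
by rewrite (permP H).
Qed.

Lemma repC x t : rep (x :: t) = rep t + (count_mem x t == 1).
Proof.
rewrite /rep /=.
case: (boolP (x \in t)) => Hx.
- have Hxu : x \in undup t by rewrite mem_undup.
  have Hp := perm_to_rem Hxu.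
  rewrite (permP Hp) (permP Hp) /= eqxx.
  have -> : count (fun v => 1 < (x == v) + count_mem v t) (rem x (undup t))
          = count (fun v => 1 < count_mem v t) (rem x (undup t)).
    apply: eq_in_count => v; rewrite rem_filter ?undup_uniq // mem_filter /=.
    by case/andP => /negbTE; rewrite eq_sym => ->.
  have : 0 < count_mem x t by rewrite -has_count has_pred1.
  case: (count_mem x t) => [|[|m]] //= _; lia.
- rewrite (count_memPn Hx) /= addn0 (count_memPn Hx) eqxx /=.
  apply: eq_in_count => v; rewrite mem_undup => Hv.
  suff -> : (x == v) = false by [].
  by apply/negbTE; apply: contraNneq Hx => ->.
Qed.

Lemma repR x t : rep (rcons t x) = rep t + (count_mem x t == 1).
Proof.
have Hp : perm_eq (rcons t x) (x :: t) by rewrite perm_rcons perm_refl.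
by rewrite (rep_perm Hp) repC.
Qed.

Lemma repM t : rep (map succn t) = rep t.
Proof.
rewrite /rep undup_map_inj; last exact: succn_inj.
rewrite count_map; apply: eq_count => v /=.
by rewrite count_map.
Qed.

Lemma rep0 t : (rep t == 0) = uniq t.
Proof.
rewrite /rep -leqn0 leqNgt -has_count.
apply/hasPn/idP => [H | Hu v _].
  apply: count_mem_uniq => x.
  case: (boolP (x \in t)) => Hx; last by rewrite (count_memPn Hx).
  have := H x; rewrite mem_undup => /(_ Hx); rewrite -leqNgt.
  have : 0 < count_mem x t by rewrite -has_count has_pred1.
  lia.
by rewrite count_uniq_mem //; case: (v \in t).
Qed.

Lemma undup1 (x : nat) (t : seq nat) : (size (undup (rcons t x)) == 1) = all (fun w : nat => w == x) t.
Proof.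
apply/idP/idP.
- move Hu: (undup (rcons t x)) => u.
  case: u Hu => [|y [|z u]] // Hu _.
  have Hm : forall w, (w \in rcons t x) = (w == y).
    by move=> w; rewrite -mem_undup Hu inE.
  have Exy : x = y by apply/eqP; rewrite -Hm mem_rcons inE eqxx.
  apply/allP => w Hw; apply/eqP; rewrite Exy; apply/eqP.
  by rewrite -Hm mem_rcons inE Hw orbT.
- move=> Hall.
  have Hp : perm_eq (undup (rcons t x)) [:: x].
    apply: uniq_perm; rewrite ?undup_uniq // => w.
    rewrite mem_undup mem_rcons !inE; apply/orP/eqP => [[/eqP //|Hw]|->].
      by apply/eqP; apply: (allP Hall).
    by left.
  by rewrite (perm_size Hp).
Qed.


Lemma count_rcons T (a : pred T) s x : count a (rcons s x) = count a s + a x.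
Proof. by rewrite -cats1 count_cat /= addn0. Qed.

Definition Ssum n (F : seq nat -> nat) := \sum_(s <- P n) F s.

Lemma S_SS n F : Ssum n.+2 F = Ssum n.+1 (fun s => F (rcons s 1)) + Ssum n.+1 (fun s => F (map succn s)).
Proof. by rewrite /Ssum P_SS big_cat !big_map. Qed.

Lemma S_pos n F G : (forall s, all (fun x => 0 < x) s -> F s = G s) -> Ssum n F = Ssum n G.
Proof.
move=> H; apply: eq_big_seq => s; rewrite memP => /pp_pos; exact: H.
Qed.

Lemma S_ext n F G : (forall s, F s = G s) -> Ssum n F = Ssum n G.
Proof. by move=> H; apply: S_pos => s _. Qed.

Arguments S_ext : clear implicits.
Arguments S_pos : clear implicits.

Lemma S_zero n : Ssum n (fun _ => 0) = 0.
Proof. by rewrite /Ssum big1. Qed.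

Lemma S_add n F G : Ssum n (fun s => F s + G s) = Ssum n F + Ssum n G.
Proof. by rewrite /Ssum big_split. Qed.

Lemma S_perm M F : \sum_(s <- parts_perim M) F s = Ssum M F.
Proof. exact: perm_big (perm_parts M). Qed.

Lemma notin1 s : all (fun x => 0 < x) s -> 1 \notin map succn s.
Proof.
move=> H; apply/mapP => [[z Hz /eqP]]; rewrite eqSS => /eqP Ez; subst z.
by have := allP H 0 Hz.
Qed.

Lemma fibSS n : fib n.+2 = fib n.+1 + fib n.
Proof. by []. Qed.

Definition c (s : seq nat) := if all odd s then 1 else 0.
Definition fg (s : seq nat) := if all odd s then size s else 0.

Lemma oddSS x : odd x.+2 = odd x.
Proof. by rewrite /= negbK. Qed.

Lemma allodd_SS s : all odd (map succn (map succn s)) = all odd s.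
Proof. by rewrite -map_comp all_map; apply: eq_all => x /=; rewrite negbK. Qed.

Lemma allodd_BA s : all odd (map succn (rcons s 1)) = false.
Proof. by rewrite map_rcons all_rcons andFb. Qed.

Lemma C_rec n : Ssum n.+3 c = Ssum n.+2 c + Ssum n.+1 c.
Proof.
rewrite S_SS (S_SS n (fun s => c (map succn s))).
rewrite (S_ext _ (fun s => c (rcons s 1)) c); last by move=> s; rewrite /c all_rcons.
rewrite (S_ext _ (fun s => c (map succn (rcons s 1))) (fun _ => 0)); last by move=> s; rewrite /c allodd_BA.
rewrite (S_ext _ (fun s => c (map succn (map succn s))) c); last by move=> s; rewrite /c allodd_SS.
by rewrite S_zero add0n.
Qed.

Lemma C_fib n : Ssum n.+1 c = fib n.+1.
Proof.
suff : Ssum n.+1 c = fib n.+1 /\ Ssum n.+2 c = fib n.+2 by case.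
elim: n => [|n [IH1 IH2]]; first by rewrite /Ssum /= !big_cons !big_nil.
by split => //; rewrite C_rec IH1 IH2.
Qed.

Lemma G_rec n : Ssum n.+3 fg = Ssum n.+2 fg + Ssum n.+2 c + Ssum n.+1 fg.
Proof.
rewrite S_SS (S_SS n (fun s => fg (map succn s))).
rewrite (S_ext _ (fun s => fg (rcons s 1)) (fun s => fg s + c s)); last first.
  by move=> s; rewrite /fg /c all_rcons size_rcons /=; case: (all odd s); rewrite ?addn1.
rewrite S_add.
rewrite (S_ext _ (fun s => fg (map succn (rcons s 1))) (fun _ => 0)); last by move=> s; rewrite /fg allodd_BA.
rewrite (S_ext _ (fun s => fg (map succn (map succn s))) fg); last by move=> s; rewrite /fg allodd_SS !size_map.
by rewrite S_zero add0n.
Qed.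

Definition d (s : seq nat) := if uniq s then 1 else 0.
Definition fh (s : seq nat) := if uniq s then size s else 0.

Lemma uniq_B s : uniq (map succn s) = uniq s.
Proof. by rewrite map_inj_uniq //; exact: succn_inj. Qed.

Lemma uniq_AA s : uniq (rcons (rcons s 1) 1) = false.
Proof. by rewrite rcons_uniq mem_rcons inE eqxx. Qed.

Lemma uniq_AB s : all (fun x => 0 < x) s -> uniq (rcons (map succn s) 1) = uniq s.
Proof. by move=> H; rewrite rcons_uniq notin1 // uniq_B. Qed.

Lemma S3 n F : Ssum n.+3 F = Ssum n.+2 (fun s => F (map succn s))
  + Ssum n.+1 (fun s => F (rcons (rcons s 1) 1)) + Ssum n.+1 (fun s => F (rcons (map succn s) 1)).
Proof. by rewrite S_SS (S_SS n (fun s => F (rcons s 1))); lia. Qed.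

Lemma D_rec n : Ssum n.+3 d = Ssum n.+2 d + Ssum n.+1 d.
Proof.
rewrite S3.
rewrite (S_ext _ (fun s => d (map succn s)) d); last by move=> s; rewrite /d uniq_B.
rewrite (S_ext _ (fun s => d (rcons (rcons s 1) 1)) (fun _ => 0)); last by move=> s; rewrite /d uniq_AA.
rewrite (S_pos _ (fun s => d (rcons (map succn s) 1)) d); last by move=> s Hs; rewrite /d uniq_AB.
by rewrite S_zero addn0.
Qed.

Lemma D_fib n : Ssum n.+1 d = fib n.+1.
Proof.
suff : Ssum n.+1 d = fib n.+1 /\ Ssum n.+2 d = fib n.+2 by case.
elim: n => [|n [IH1 IH2]]; first by rewrite /Ssum /= !big_cons !big_nil.
by split => //; rewrite D_rec IH1 IH2.
Qed.

Lemma H_rec n : Ssum n.+3 fh = Ssum n.+2 fh + Ssum n.+1 fh + Ssum n.+1 d.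
Proof.
rewrite S3.
rewrite (S_ext _ (fun s => fh (map succn s)) fh); last by move=> s; rewrite /fh uniq_B size_map.
rewrite (S_ext _ (fun s => fh (rcons (rcons s 1) 1)) (fun _ => 0)); last by move=> s; rewrite /fh uniq_AA.
rewrite (S_pos _ (fun s => fh (rcons (map succn s) 1)) (fun s => fh s + d s)); last first.
  move=> s Hs; rewrite /fh /d uniq_AB // size_rcons size_map.
  by case: (uniq s); rewrite ?addn1.
by rewrite S_add S_zero addn0 addnA.
Qed.

Definition fg1 (s : seq nat) := if in_G1 s then 1 else 0.
Definition q (s : seq nat) := if all (fun x => odd x ==> (x == 1)) s then 1 else 0.

Lemma Q_rec n : Ssum n.+2 q = Ssum n.+1 q + Ssum n.+1 c.
Proof.
rewrite S_SS.
rewrite (S_ext _ (fun s => q (rcons s 1)) q); last by move=> s; rewrite /q all_rcons.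
rewrite (S_pos _ (fun s => q (map succn s)) c) //.
move=> s Hs; rewrite /q /c all_map; congr (if _ then _ else _).
apply: eq_in_all => x Hx /=; have := allP Hs x Hx.
by case: x {Hx} => [|x] //= _; rewrite eqSS; case: (odd x).
Qed.

Lemma Q_fib n : Ssum n.+1 q = fib n.+2.
Proof.
elim: n => [|n IH]; first by rewrite /Ssum /= !big_cons !big_nil.
by rewrite Q_rec IH C_fib.
Qed.

Lemma G1_rec n : Ssum n.+3 fg1 = Ssum n.+2 fg1 + Ssum n.+1 fg1 + Ssum n.+1 q.
Proof.
rewrite S_SS (S_SS n (fun s => fg1 (map succn s))).
rewrite (S_ext _ (fun s => fg1 (rcons s 1)) fg1); last by move=> s; rewrite /fg1 /in_G1 filter_rcons.
rewrite (S_ext _ (fun s => fg1 (map succn (rcons s 1))) q); last first.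
  move=> s; rewrite /fg1 /q /in_G1 map_rcons filter_rcons /= undup1 all_filter all_map.
  congr (if _ then _ else _); apply: eq_all => x /=.
  by rewrite negbK eqSS.
rewrite (S_ext _ (fun s => fg1 (map succn (map succn s))) fg1); last first.
  move=> s; rewrite /fg1 /in_G1 -map_comp filter_map undup_map_inj; last first.
    by move=> a b /= /eqP; rewrite !eqSS => /eqP.
  rewrite size_map; congr (if size (undup _) == 1 then _ else _).
  by apply: eq_filter => x /=; rewrite negbK.
lia.
Qed.

Definition fh1 (s : seq nat) := if rep s == 1 then 1 else 0.
Definition r (s : seq nat) := if rep (rcons (rcons s 1) 1) == 1 then 1 else 0.

Lemma cnt1 s : all (fun x => 0 < x) s -> count_mem 1 (map succn s) = 0.
Proof. by move=> H; apply/count_memPn; exact: notin1. Qed.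

Lemma R_rec n : Ssum n.+2 r = Ssum n.+1 r + Ssum n.+1 d.
Proof.
rewrite S_SS.
rewrite (S_ext _ (fun s => r (rcons s 1)) r); last first.
  move=> s; rewrite /r [rep (rcons (rcons (rcons s 1) 1) 1)]repR.
  by rewrite !count_rcons /= !addn1 addn0.
rewrite (S_pos _ (fun s => r (map succn s)) d) //.
move=> s Hs; rewrite /r /d !repR !count_rcons cnt1 // repM /= addn0 addn1 eqSS.
by rewrite rep0.
Qed.

Lemma R_fib n : Ssum n.+1 r = fib n.+2.
Proof.
elim: n => [|n IH]; first by rewrite /Ssum /= !big_cons !big_nil.
by rewrite R_rec IH D_fib.
Qed.

Lemma H1_rec n : Ssum n.+3 fh1 = Ssum n.+2 fh1 + Ssum n.+1 fh1 + Ssum n.+1 r.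
Proof.
rewrite S3.
rewrite (S_ext _ (fun s => fh1 (map succn s)) fh1); last by move=> s; rewrite /fh1 repM.
rewrite (S_ext _ (fun s => fh1 (rcons (rcons s 1) 1)) r) //.
rewrite (S_pos _ (fun s => fh1 (rcons (map succn s) 1)) fh1); last first.
  by move=> s Hs; rewrite /fh1 repR cnt1 // repM addn0.
lia.
Qed.


Lemma gE M : g M = Ssum M fg.
Proof. by rewrite /g sumnE big_map big_filter big_mkcond S_perm. Qed.
Lemma hE M : h M = Ssum M fh.
Proof. by rewrite /h sumnE big_map big_filter big_mkcond S_perm. Qed.
Lemma g1E M : g1 M = Ssum M fg1.
Proof. by rewrite /g1 size_filter -sum1_count big_mkcond S_perm. Qed.
Lemma h1E M : h1 M = Ssum M fh1.
Proof. by rewrite /h1 size_filter -sum1_count big_mkcond S_perm. Qed.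

Theorem mainTheorem5 (M : nat) : 2 <= M ->
  [/\ g M = g (M - 1) + g (M - 2) + fib (M - 1),
      h M = h (M - 1) + h (M - 2) + fib (M - 2),
      g1 M = g1 (M - 1) + g1 (M - 2) + fib (M - 1) &
      h1 M = h1 (M - 1) + h1 (M - 2) + fib (M - 1)].
Proof.
case: M => [|[|[|n]]] // _.
have -> : n.+3 - 1 = n.+2 by lia.
have -> : n.+3 - 2 = n.+1 by lia.
rewrite !gE !hE !g1E !h1E.
split.
- by rewrite G_rec C_fib; lia.
- by rewrite H_rec D_fib.
- by rewrite G1_rec Q_fib.
- by rewrite H1_rec R_fib.
Qed.
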